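(* Let $\overrightarrow{W}$ be a Morse sequence on a simplicial complex $K$ and let $\sigma,\tau$ be critical simplices of $\overrightarrow{W}$. Then $\sigma\in\widehat{\partial}(\tau)$ if and only if $\tau\in\widehat{\delta}(\sigma)$.
   Context: A simplicial complex $K$ is a finite collection of non-empty finite sets closed under taking non-empty subsets; $\dim\sigma=|\sigma|-1$, $K^{(p)}$ the set of $p$-simplices. A pair $(\sigma,\tau)$ with $\sigma\subsetneq\tau$ is a free pair for $K$ if $\tau$ is the only simplex other than $\sigma$ containing $\sigma$; $K$ is then an elementary expansion of $K\setminus\{\sigma,\tau\}$. If $\nu$ is a facet (maximal simplex) of $K$, $K$ is an elementary filling of $K\setminus\{\nu\}$. A Morse sequence on $K$ is a sequence $\langle\emptyset=K_0,\dots,K_k=K\rangle$ with each $K_i$ an elementary expansion or filling of $K_{i-1}$; simplices added by fillings are critical; for an expansion $K_i=K_{i-1}\cup\{\sigma,\tau\}$, $\sigma\subset\tau$, $(\sigma,\tau)$ is a regular pair, $\sigma$ lower regular, $\tau$ upper regular. $K[p]$ is the $\mathbb{Z}_2$-vector space of subsets of $K^{(p)}$ (sum = symmetric difference, $0=\emptyset$); $\partial(\sigma)=\{\tau\in K^{(p-1)}:\tau\subset\sigma\}$, $\delta(\sigma)=\{\tau\in K^{(p+1)}:\sigma\subset\tau\}$, extended linearly to chains. The reference map $\curlywedge$ is the unique map assigning to each $p$-simplex a set of critical $p$-simplices, extended linearly (mod 2) to chains, with $\curlywedge(\nu)=\{\nu\}$ for critical $\nu$ and $\curlywedge(\tau)=0=\curlywedge(\partial(\tau))$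 for upper regular $\tau$; the coreference map $\curlyvee$ is the unique such map with $\curlyvee(\nu)=\{\nu\}$ for critical $\nu$ and $\curlyvee(\sigma)=0=\curlyvee(\delta(\sigma))$ for lower regular $\sigma$. For a critical $p$-simplex $\nu$, $\widehat{\partial}(\nu)=\curlywedge(\partial(\nu))$ and $\widehat{\delta}(\nu)=\curlyvee(\delta(\nu))$. *)

(* Defs.v *)
From mathcomp Require Import all_boot.

Set Implicit Arguments.
Unset Strict Implicit.
Unset Printing Implicit Defensive.

Section Defs.
Variable V : finType.
Notation simplex := {set V}.
Notation complex := {set {set V}}.

Definition simplicial_complex (K : complex) : Prop :=
  forall s, s \in K -> s != set0 /\
    (forall t : simplex, t != set0 -> t \subset s -> t \in K).

Definition free_pair (K : complex) (s t : simplex) : Prop :=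
  [/\ s \in K, t \in K, s \proper t &
      forall r, r \in K -> s \subset r -> r = s \/ r = t].

Definition facet (K : complex) (nu : simplex) : Prop :=
  nu \in K /\ forall r, r \in K -> nu \subset r -> r = nu.

(* A step of a Morse sequence: an elementary filling adding the facet nu,
   or an elementary expansion adding the free pair (s,t). *)
Inductive step : Type :=
| Fill of simplex
| Expand of simplex & simplex.

Definition added (st : step) : complex :=
  match st with Fill nu => [set nu] | Expand s t => [set s; t] end.

Definition complex_of (W : seq step) : complex :=
  \bigcup_(st <- W) added st.

(* W is a Morse sequence on K: K_i := complex_of (take i W), K_0 = empty,
   K_k = K, and each K_{i+1} is an elementary filling or an elementary
   expansion of K_i. *)
Definition morse_seq (K : complex) (W : seq step) : Prop :=
  complex_of W = K /\
  forall i, i < size W ->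
    let Kp := complex_of (take i W) in
    let Kn := complex_of (take i.+1 W) in
    simplicial_complex Kn /\
    match nth (Fill set0) W i with
    | Fill nu => nu \notin Kp /\ facet Kn nu
    | Expand s t => [/\ s \notin Kp, t \notin Kp & free_pair Kn s t]
    end.

Definition critical (W : seq step) (nu : simplex) : Prop := exists2 i, i < size W & nth (Fill set0) W i = Fill nu.
Definition lower_regular (W : seq step) (s : simplex) : Prop :=
  exists t, exists2 i, i < size W & nth (Fill set0) W i = Expand s t.
Definition upper_regular (W : seq step) (t : simplex) : Prop :=
  exists s, exists2 i, i < size W & nth (Fill set0) W i = Expand s t.

(* boundary and coboundary (chains are subsets of K^{(p)}); dim = card - 1 *)
Definition bd (K : complex) (s : simplex) : complex :=
  [set r in K | (r \subset s) && (#|r| == #|s|.-1)].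
Definition cobd (K : complex) (s : simplex) : complex :=
  [set r in K | (s \subset r) && (#|r| == #|s|.+1)].

(* Z_2-linear extension of a map on simplices to chains: y lies in the
   image of the chain c iff it lies in f x for an odd number of x in c *)
Definition linext (f : simplex -> complex) (c : complex) : complex :=
  [set y | odd #|[set x in c | y \in f x]|].

Definition is_reference_map (K : complex) (W : seq step)
    (f : simplex -> complex) : Prop :=
  [/\ (forall s, s \in K -> forall y, y \in f s ->
          critical W y /\ #|y| = #|s|),
      (forall nu, nu \in K -> critical W nu -> f nu = [set nu]) &
      (forall t, t \in K -> upper_regular W t ->
          f t = set0 /\ linext f (bd K t) = set0)].

Definition is_coreference_map (K : complex) (W : seq step)
    (g : simplex -> complex) : Prop :=
  [/\ (forall s, s \in K -> forall y, y \in g s ->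
          critical W y /\ #|y| = #|s|),
      (forall nu, nu \in K -> critical W nu -> g nu = [set nu]) &
      (forall s, s \in K -> lower_regular W s ->
          g s = set0 /\ linext g (cobd K s) = set0)].

Definition hbd K (f : simplex -> complex) (nu : simplex) := linext f (bd K nu).
Definition hcobd K (g : simplex -> complex) (nu : simplex) :=
  linext g (cobd K nu).

End Defs.

(* Main.v *)
Require Import Defs.
From mathcomp Require Import all_boot.

Set Implicit Arguments.
Unset Strict Implicit.
Unset Printing Implicit Defensive.

Lemma oddsum (I : finType) (F : I -> nat) :
  odd (\sum_(i : I) F i) = \big[addb/false]_(i : I) odd (F i).
Proof. by elim/big_rec2: _ => // i x y _ <-; rewrite oddD. Qed.

Lemma xor_single (I : finType) (j : I) (F : I -> bool) :
  (forall i, i != j -> F i = false) -> \big[addb/false]_(i : I) F i = F j.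
Proof.
move=> H; rewrite (bigD1 j) //= big1 ?addbF // => i /andP[_ ij]; exact: H.
Qed.

Section S.
Variable V : finType.

Lemma crit_inK (K : {set {set V}}) W s :
  morse_seq K W -> critical W s -> s \in K.
Proof.
move=> [<- _] [i iW Hi]; rewrite /complex_of (big_nth (Fill set0)) big_mkord.
apply/bigcupP; exists (Ordinal iW) => //=; rewrite Hi /= set11 //.
Qed.

Lemma classify (K : {set {set V}}) W s :
  morse_seq K W -> s \in K ->
  [\/ critical W s, lower_regular W s | upper_regular W s].
Proof.
move=> [<- _]; rewrite /complex_of (big_nth (Fill set0)) big_mkord.
case/bigcupP=> [[i iW]] _ /=.
case E: (nth (Fill set0) W i) => [nu|a b] /=.
  by rewrite in_set1 => /eqP ->; apply: Or31; exists i.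
rewrite in_set2 => /orP[] /eqP ->.
  by apply: Or32; exists b, i.
by apply: Or33; exists a, i.
Qed.
End S.

Theorem theorem3 (V : finType) (K : {set {set V}}) (W : seq (step V))
    (f g : {set V} -> {set {set V}}) (sigma tau : {set V}) :
  simplicial_complex K -> morse_seq K W ->
  is_reference_map K W f -> is_coreference_map K W g ->
  critical W sigma -> critical W tau ->
  (sigma \in hbd K f tau) <-> (tau \in hcobd K g sigma).
Proof.
move=> HK HW [_ fc fu] [_ gc gl] cs ct.
have sK := crit_inK HW cs; have tK := crit_inK HW ct.
pose chi (a b : {set V}) : nat :=
  [&& a \in K, b \in K, tau \in g a, sigma \in f b, b \subset a &
      #|a| == #|b|.+1].
have EA : forall a, \sum_b chi a b =
   if (a \in K) && (tau \in g a) then #|[set b in bd K a | sigma \in f b]| else 0.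
  move=> a; case: ifP => [/andP[aK ta] | H].
    have : 0 < #|a| by rewrite card_gt0; case: (HK a aK).
    case E: #|a| => [//|n] _.
    rewrite -sum1_card [RHS]big_mkcond; apply: eq_bigr => b _.
    rewrite /chi !in_set aK ta E eqSS /=.
    by rewrite [n == _]eq_sym; case: (b \in K); case: (sigma \in f b); case: (b \subset a); case: (#|b| == n).
  apply: big1 => b _; rewrite /chi.
  by case: (a \in K) H; case: (tau \in g a); rewrite ?andbF.
have EB : forall b, \sum_a chi a b =
   if (b \in K) && (sigma \in f b) then #|[set a in cobd K b | tau \in g a]| else 0.
  move=> b; case: ifP => [/andP[bK sb] | H].
    rewrite -sum1_card [RHS]big_mkcond; apply: eq_bigr => a _.
    rewrite /chi !in_set bK sb /=.
    by case: (a \in K); case: (tau \in g a); case: (b \subset a); case: (_ == _).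
  apply: big1 => a _; rewrite /chi.
  by case: (b \in K) H; case: (sigma \in f b); rewrite ?andbF.
have LA : odd (\sum_a \sum_b chi a b) = (sigma \in hbd K f tau).
  rewrite oddsum (@xor_single _ tau).
    by rewrite EA tK gc // set11 /hbd /linext in_set.
  move=> a na; rewrite EA; case: ifP => // /andP[aK ta].
  case: (classify HW aK) => [ca|la|ua].
  - by move: ta; rewrite gc // in_set1 => /eqP tE; rewrite tE eqxx in na.
  - by move: ta; rewrite (gl a aK la).1 in_set0.
  - have := (fu a aK ua).2 => /setP /(_ sigma).
    by rewrite /linext in_set in_set0.
have LB : odd (\sum_b \sum_a chi a b) = (tau \in hcobd K g sigma).
  rewrite oddsum (@xor_single _ sigma).
    by rewrite EB sK fc // set11 /hcobd /linext in_set.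
  move=> b nb; rewrite EB; case: ifP => // /andP[bK sb].
  case: (classify HW bK) => [cb|lb|ub].
  - by move: sb; rewrite fc // in_set1 => /eqP sE; rewrite sE eqxx in nb.
  - have := (gl b bK lb).2 => /setP /(_ tau).
    by rewrite /linext in_set in_set0.
  - by move: sb; rewrite (fu b bK ub).1 in_set0.
rewrite -LA -LB exchange_big; done.
Qed.
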